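(* Let $G$ be a finite group, $S$ a generating set of $G$, and $s \in S$. Suppose that (i) $\langle s \rangle$ is a normal subgroup of $G$; (ii) the order $|s|$ divides $pq$, where $p$ and $q$ are distinct primes; (iii) $s^p \in Z(G)$; (iv) $q$ divides $|G/\langle s \rangle|$; and (v) $\mathrm{Cay}(G/\langle s \rangle; S)$ has a hamiltonian cycle. Then $\mathrm{Cay}(G;S)$ has a hamiltonian cycle.
   Context: For a group $G$ and a subset $S \subseteq G$, the Cayley graph $\mathrm{Cay}(G;S)$ has vertex set $G$, with $g$ adjacent to $gs$ for every $g \in G$ and $s \in S \cup S^{-1}$. For a normal subgroup $N$ of $G$, $\mathrm{Cay}(G/N;S)$ denotes the Cayley graph of $G/N$ with respect to the image of $S$ in $G/N$. $Z(G)$ is the center of $G$. *)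

(* Defs.v *)
From mathcomp Require Import all_boot all_order all_fingroup all_solvable.
Set Implicit Arguments. Unset Strict Implicit. Unset Printing Implicit Defensive.
Local Open Scope group_scope.

Definition cay_adj (T : finGroupType) (A : {set T}) : rel T :=
  fun x y => [exists a in A, (y == x * a) || (y == x * a^-1)].

Definition cay_hamiltonian (T : finGroupType) (V A : {set T}) : Prop :=
  exists c : seq T, [/\ uniq c, V =i c & path.cycle (cay_adj A) c].

(* Main.v *)
Require Import Defs.
From mathcomp Require Import all_boot all_fingroup all_solvable.
From mathcomp Require Import zify.
Set Implicit Arguments. Unset Strict Implicit. Unset Printing Implicit Defensive.

Lemma path_iota (T : Type) (r : rel T) (f : nat -> T) x m n :
  (0 < n -> r x (f m)) ->
  (forall b, m <= b -> b.+1 < m + n -> r (f b) (f b.+1)) ->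
  path r x [seq f b | b <- iota m n].
Proof.
elim: n x m => [|n IH] x m //= H0 H1.
rewrite H0 //=; apply: IH => [Hn|b Hb Hb2]; first by apply: H1; lia.
by apply: H1; lia.
Qed.

Lemma last_iota (T : Type) (f : nat -> T) x m n :
  last x [seq f b | b <- iota m n.+1] = f (m + n).
Proof.
elim: n x m => [|n IH] x m /=; first by rewrite addn0.
by have := IH (f m) m.+1; rewrite /= => ->; rewrite addSnnS.
Qed.

Lemma last_nonempty (T : Type) (s : seq T) x y : 0 < size s -> last x s = last y s.
Proof. by case: s. Qed.

Lemma path_flat (T : Type) (r : rel T) (B : nat -> seq T) x m n :
  (0 < n -> path r x (B m)) ->
  (forall j y, m <= j -> j.+1 < m + n -> path r (last y (B j)) (B j.+1)) ->
  path r x (flatten [seq B j | j <- iota m n]).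
Proof.
elim: n x m => [|n IH] x m //= H0 H1.
rewrite cat_path H0 //=; apply: IH => [Hn|j y Hj Hj2]; first by apply: H1; lia.
by apply: H1; lia.
Qed.

Lemma last_flat (T : Type) (B : nat -> seq T) x y m n :
  0 < size (B (m + n)) ->
  last x (flatten [seq B j | j <- iota m n.+1]) = last y (B (m + n)).
Proof.
move=> Hne; rewrite -addn1 iotaD map_cat flatten_cat last_cat /= cats0.
exact: last_nonempty.
Qed.

Lemma uniq_flat (T : eqType) (B : nat -> seq T) (s : seq nat) :
  uniq s -> (forall j, j \in s -> uniq (B j)) ->
  (forall j j' x, j \in s -> j' \in s -> x \in B j -> x \in B j' -> j = j') ->
  uniq (flatten [seq B j | j <- s]).
Proof.
elim: s => [|j s IH] //= /andP[js Us] HU HD.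
rewrite cat_uniq HU ?mem_head //= IH //; last first.
- by move=> j1 j2 x H1 H2; apply: HD; rewrite inE ?H1 ?H2 orbT.
- by move=> j1 H1; apply: HU; rewrite inE H1 orbT.
rewrite andbT; apply/hasPn => x /flatten_mapP [j' j's xB]; apply/negP => xBj.
have j's' : j' \in j :: s by rewrite inE j's orbT.
have E := HD j j' x (mem_head _ _) j's' xBj xB.
by rewrite E j's in js.
Qed.

Lemma size_flat (T : Type) (B : nat -> seq T) (s : seq nat) c :
  (forall j, j \in s -> size (B j) = c) ->
  size (flatten [seq B j | j <- s]) = size s * c.
Proof.
elim: s => [|j s IH] //= H; rewrite size_cat H ?mem_head // IH // => j' Hj'.
by apply: H; rewrite inE Hj' orbT.
Qed.

Definition lex3 (T : Type) (F : nat -> nat -> nat -> T) d n L :=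
  flatten [seq flatten [seq [seq F a i b | b <- iota 0 L] | i <- iota 0 n] | a <- iota 0 d].

Lemma cycle_lex3 (T : Type) (r : rel T) (F : nat -> nat -> nat -> T) d n L :
  0 < d -> 0 < n -> 0 < L ->
  (forall a i b, a < d -> i < n -> b.+1 < L -> r (F a i b) (F a i b.+1)) ->
  (forall a i, a < d -> i.+1 < n -> r (F a i L.-1) (F a i.+1 0)) ->
  (forall a, a.+1 < d -> r (F a n.-1 L.-1) (F a.+1 0 0)) ->
  r (F d.-1 n.-1 L.-1) (F 0 0 0) ->
  path.cycle r (lex3 F d n L).
Proof.
move=> d0 n0 L0 Hb Hi Ha Hw.
have lastcol : forall a i y, last y [seq F a i b | b <- iota 0 L] = F a i L.-1.
  by move=> a i y; rewrite -(prednK L0) last_iota.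
have lastpass : forall a y, last y (flatten [seq [seq F a i b | b <- iota 0 L] | i <- iota 0 n]) = F a n.-1 L.-1.
  move=> a y; rewrite -{1}(prednK n0) (last_flat _ y) ?add0n ?lastcol //.
  by rewrite -(prednK L0).
have pathpass : forall a x, a < d -> r x (F a 0 0) -> path r x (flatten [seq [seq F a i b | b <- iota 0 L] | i <- iota 0 n]).
  move=> a x ad rx; apply: path_flat => [_|j y _ Hj].
    by apply: path_iota => // b _ Hb2; apply: Hb.
  rewrite lastcol; apply: path_iota => [_|b _ Hb2]; first by apply: Hi.
  by apply: Hb => //; lia.
rewrite /lex3 (cycle_path (F 0 0 0)).
rewrite -{1}(prednK d0) (last_flat _ (F 0 0 0)) ?add0n ?lastpass; last first.
  rewrite ?add0n (@size_flat _ _ _ L) ?size_iota ?muln_gt0 ?n0 //.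
  by move=> i _; rewrite size_map size_iota.
apply: path_flat => [_|j y _ Hj]; first by apply: pathpass.
by rewrite lastpass; apply: pathpass => //; apply: Ha.
Qed.

Lemma mem_lex3 (T : eqType) (F : nat -> nat -> nat -> T) d n L x :
  x \in lex3 F d n L -> exists a i b, [/\ a < d, i < n, b < L & x = F a i b].
Proof.
case/flatten_mapP => a; rewrite mem_iota => /andP[_ Ha] /flatten_mapP [i].
rewrite mem_iota => /andP[_ Hi] /mapP [b]; rewrite mem_iota => /andP[_ Hb] ->.
by exists a, i, b; split.
Qed.

Lemma size_lex3 (T : Type) (F : nat -> nat -> nat -> T) d n L :
  size (lex3 F d n L) = d * (n * L).
Proof.
rewrite /lex3 (@size_flat _ _ _ (n * L)) ?size_iota // => a _.
by rewrite (@size_flat _ _ _ L) ?size_iota // => i _; rewrite size_map size_iota.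
Qed.

Lemma uniq_lex3 (T : eqType) (F : nat -> nat -> nat -> T) d n L :
  (forall a i b a' i' b', a < d -> i < n -> b < L -> a' < d -> i' < n -> b' < L ->
     F a i b = F a' i' b' -> [/\ a = a', i = i' & b = b']) ->
  uniq (lex3 F d n L).
Proof.
move=> Hinj; apply: uniq_flat => [|a|a a' x]; rewrite ?iota_uniq //.
- rewrite mem_iota => /andP[_ Ha]; apply: uniq_flat => [|i|i i' x]; rewrite ?iota_uniq //.
  + rewrite mem_iota => /andP[_ Hi]; rewrite map_inj_in_uniq ?iota_uniq // => b b'.
    rewrite !mem_iota => /andP[_ Hb] /andP[_ Hb'] E.
    by case: (Hinj a i b a i b').
  + rewrite !mem_iota => /andP[_ Hi] /andP[_ Hi'] /mapP[b] + -> /mapP[b'].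
    rewrite !mem_iota => /andP[_ Hb] /andP[_ Hb'] E.
    by case: (Hinj a i b a i' b').
- rewrite !mem_iota => /andP[_ Ha] /andP[_ Ha'] /flatten_mapP[i] + /mapP[b] + ->.
  rewrite !mem_iota => /andP[_ Hi] /andP[_ Hb] /flatten_mapP[i'] + /mapP[b'].
  rewrite !mem_iota => /andP[_ Hi'] /andP[_ Hb'] E.
  by case: (Hinj a i b a' i' b').
Qed.
Lemma inj_arith k j e a a' b b' X : 0 < k -> coprime k e ->
  b < gcdn k j -> b' < gcdn k j ->
  (j * a + (X + b * e) == j * a' + (X + b' * e) %[mod k]) -> b = b'.
Proof.
move=> k0 cke; set L := gcdn k j => Hb Hb' /eqP H.
have Lk : L %| k by apply: dvdn_gcdl.
have Lj : L %| j by apply: dvdn_gcdr.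
have cLe : coprime L e by apply: coprime_dvdl cke.
have := congr1 (modn^~ L) H; rewrite /= !modn_dvdm //.
have E : forall z, j * z = (j %/ L * z) * L.
  by move=> z; rewrite -{1}(divnK Lj) mulnAC.
rewrite (E a) (E a') !modnMDl => /eqP; rewrite eqn_modDl; clear H E.
wlog le : b b' Hb Hb' / b <= b'.
  move=> W; case: (leqP b b') => [|lt] E; first exact: W.
  by symmetry; apply: W => //; [lia | rewrite eq_sym].
rewrite eq_sym eqn_mod_dvd ?leq_mul2r ?le ?orbT // -mulnBl Gauss_dvdl //.
case: (posnP (b' - b)) => [|pos /dvdn_leq]; first by lia.
by move/(_ pos); lia.
Qed.



Lemma main_arith k p q E r : prime p -> prime q -> p != q -> k %| p * q ->
  (E * p == 0 %[mod k]) -> (E * r == E %[mod k]) -> (p * r == p %[mod k]) ->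
  (E == 0 %[mod k]) || (r == 1 %[mod k]).
Proof.
move=> pp pq pnq kpq.
have k0 : 0 < k.
  apply: dvdn_gt0 kpq; by rewrite muln_gt0 !prime_gt0.
wlog r0 : r / 0 < r.
  move=> W; case: (posnP r) => [->|]; last exact: W.
  move=> H1 H2 H3; have := W k k0 H1; rewrite !modnMl modnn.
  rewrite muln0 mod0n in H2; rewrite muln0 mod0n in H3.
  by rewrite mod0n => W'; exact: (W' H2 H3).
move=> H1 H2 H3.
have Ek : k %| E * p by move: H1; rewrite mod0n.
rewrite eqn_mod_dvd // subn0.
have p0 : 0 < p by apply: prime_gt0.
case: (boolP (p %| k)) => pk; last first.
  have ckp : coprime k p by rewrite coprime_sym prime_coprime.
  by move: Ek; rewrite Gauss_dvdl // => ->.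
set k' := k %/ p.
have kk : k = p * k' by rewrite /k' mulnC divnK.
have k'q : k' %| q by move: kpq; rewrite kk dvdn_pmul2l.
have cpk' : coprime p k'.
  apply: (coprime_dvdr k'q); rewrite prime_coprime // dvdn_prime2 //.
have k'E : k' %| E by move: Ek; rewrite kk [p * _]mulnC dvdn_pmul2r.
move: H2 H3; rewrite !eqn_mod_dvd ?leq_pmulr // => H2 H3.
have k'r : k' %| r - 1.
  by move: H3; rewrite kk -[X in _ - X]muln1 -mulnBr dvdn_pmul2l.
case: (boolP (p %| E)) => pE.
  by rewrite kk Gauss_dvd // pE k'E.
apply/orP; right; rewrite kk Gauss_dvd // k'r andbT.
have : p %| E * (r - 1).
  by rewrite mulnBr muln1; apply: dvdn_trans H2; rewrite kk dvdn_mulr.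
have cpE : coprime p E by rewrite prime_coprime.
by rewrite Gauss_dvdr.
Qed.



Local Open Scope group_scope.

Lemma cycle_nth (T : Type) (r : rel T) (c : seq T) x0 i :
  path.cycle r c -> i < size c -> r (nth x0 c i) (nth x0 c (i.+1 %% size c)).
Proof.
move=> Hc Hi; have n0 : 0 < size c by lia.
move: Hc; rewrite (cycle_path x0) => /(pathP x0) H.
case: (ltnP i.+1 (size c)) => Hi2.
  by rewrite modn_small //; have := H i.+1 Hi2.
have -> : i.+1 = size c by lia.
rewrite modnn; have := H 0 n0; rewrite /= -nth_last.
by have -> : i = (size c).-1 by lia.
Qed.

Lemma setup (gT : finGroupType) (G : {group gT}) (S : {set gT}) (s : gT)
    (cq : seq (coset_of <[s]>)) :
  S \subset G -> <[s]> <| G -> uniq cq -> (G / <[s]>) =i cq ->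
  path.cycle (cay_adj (coset <[s]> @: S)) cq ->
  exists (v t : nat -> gT),
    [/\ (forall i, i <= size cq -> v i \in G),
        (forall i, i < size cq -> (t i \in S) || ((t i)^-1 \in S)),
        (forall i, v i.+1 = v i * t i) &
        (forall i, i <= size cq -> coset <[s]> (v i) = nth 1 cq (i %% size cq))].
Proof.
move=> sSG nNG Uc Ec Cc.
set N := <[s]>; set n := size cq.
have GnN : G \subset 'N(N) by apply: normal_norm.
have n0 : 0 < n.
  have : (1 : coset_of N) \in cq by rewrite -Ec group1.
  by rewrite /n; case: (cq).
pose C i := nth 1 cq i.
pose P i (t : gT) := ((t \in S) || (t^-1 \in S)) && (C (i.+1 %% n) == C i * coset N t).
pose t i := odflt 1 [pick t | P i t].
have Ht : forall i, i < n -> P i (t i).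
  move=> i Hi; rewrite /t; case: pickP => [x //|H0]; exfalso.
  have := cycle_nth 1 Cc Hi; rewrite -/n -/(C _) -/(C _) => /existsP [A].
  case/andP => /imsetP [a aS ->] /orP [] /eqP E.
  - by have := H0 a; rewrite /P aS E eqxx.
  - have := H0 a^-1; rewrite /P invgK aS orbT E.
    rewrite morphV ?eqxx //; apply: (subsetP GnN); exact: (subsetP sSG).
have tG : forall i, i < n -> t i \in G.
  move=> i /Ht /andP [/orP [] H _]; first exact: (subsetP sSG).
  by rewrite -[t i]invgK groupV; apply: (subsetP sSG).
have [v0 [v0G v0C]] : exists v0, v0 \in G /\ coset N v0 = C 0.
  have : C 0 \in G / N by rewrite Ec mem_nth.
  by case/morphimP => x xN xG ->; exists x.
pose v i := v0 * \prod_(j < i) t j.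
have vS : forall i, v i.+1 = v i * t i.
  by move=> i; rewrite /v big_ord_recr /= mulgA.
have vG : forall i, i <= n -> v i \in G.
  elim=> [|i IH] Hi; first by rewrite /v big_ord0 mulg1.
  by rewrite vS groupM ?IH ?tG //; lia.
exists v, t; split => //; last first.
- elim=> [|i IH] Hi.
    by rewrite mod0n /v big_ord0 mulg1.
  rewrite vS morphM; first last.
  + by apply: (subsetP GnN); apply: tG; lia.
  + by apply: (subsetP GnN); apply: vG; lia.
  change (coset N (v i) * coset N (t i) = C (i.+1 %% n)).
  rewrite IH; last lia.
  have /andP [_ /eqP ->] := Ht i Hi.
  by rewrite (modn_small Hi).
by move=> i /Ht /andP [].
Qed.
Definition cexp (gT : finGroupType) (s g : gT) : nat :=
  if [pick i : 'I_#[s] | s ^ g == s ^+ i] is Some i then nat_of_ord i else 0.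

Lemma cexpP (gT : finGroupType) (s g : gT) : s ^ g \in <[s]> -> s ^ g = s ^+ cexp s g.
Proof.
move=> /cycleP [i Hi]; rewrite /cexp; case: pickP => [x /eqP //|H].
have := H (Ordinal (ltn_pmod i (order_gt0 s))).
by rewrite /= expg_mod_order Hi eqxx.
Qed.

Lemma coset_eq_mem (gT : finGroupType) (G N : {group gT}) x y :
  G \subset 'N(N) -> x \in G -> y \in G -> coset N x = coset N y -> x * y^-1 \in N.
Proof.
move=> GN xG yG E; have xN := subsetP GN x xG; have yN := subsetP GN y yG.
apply: coset_idr; first by rewrite groupM ?groupV.
by rewrite morphM ?groupV // morphV //= E mulgV.
Qed.

Lemma coset_mulN (gT : finGroupType) (N : {group gT}) z y :
  y \in 'N(N) -> z \in N -> coset N (z * y) = coset N y.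
Proof.
move=> yN zN; rewrite morphM //; last exact: (subsetP (normG N)).
by rewrite /= coset_id // mul1g.
Qed.

Lemma reps (gT : finGroupType) (G : {group gT}) (S : {set gT}) (s : gT)
    (cq : seq (coset_of <[s]>)) :
  S \subset G -> <[s]> <| G -> uniq cq -> (G / <[s]>) =i cq ->
  path.cycle (cay_adj (coset <[s]> @: S)) cq ->
  exists (v t : nat -> gT),
    [/\ 0 < size cq, size cq = #|G / <[s]>|, #|G| = (size cq * #[s])%N,
        (forall i, i <= size cq -> v i \in G) &
        (forall i, i < size cq -> (t i \in S) || ((t i)^-1 \in S))] /\
    [/\ (forall i, v i.+1 = v i * t i),
        (forall i j, i < size cq -> j < size cq ->
                     coset <[s]> (v i) = coset <[s]> (v j) -> i = j),
        (forall g, g \in G -> exists2 i, i < size cq & coset <[s]> g = coset <[s]> (v i)) &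
        coset <[s]> (v (size cq)) = coset <[s]> (v 0)].
Proof.
move=> sSG nNG Uc Ec Cc.
have [v [t [vG tS vS vC]]] := setup sSG nNG Uc Ec Cc.
have GnN : G \subset 'N(<[s]>) by apply: normal_norm.
set n := size cq in vG tS vC *.
have n0 : 0 < n.
  have : (1 : coset_of <[s]>) \in cq by rewrite -Ec group1.
  by rewrite /n; case: (cq).
have nq : n = #|G / <[s]>| by rewrite (eq_card Ec); apply/esym/card_uniqP.
exists v, t; split; split => //.
- rewrite nq card_quotient // -(Lagrange (normal_sub nNG)) mulnC //.
- move=> i j Hi Hj; rewrite !vC ?(ltnW Hi) ?(ltnW Hj) // !modn_small //.
  by move/eqP; rewrite nth_uniq // => /eqP.
- move=> g gG; have : coset <[s]> g \in cq by rewrite -Ec mem_quotient.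
  move=> gc; exists (index (coset <[s]> g) cq); first by rewrite index_mem.
  rewrite vC; last by apply: ltnW; rewrite index_mem.
  by rewrite modn_small ?index_mem // nth_index.
- by rewrite !vC // modnn mod0n.
Qed.

Lemma ham_pack1 (T : finType) (V : {set T}) (r : rel T) (c : seq T) :
  uniq c -> (forall x, x \in c -> x \in V) -> #|V| <= size c -> path.cycle r c ->
  exists c, [/\ uniq c, V =i c & path.cycle r c].
Proof.
move=> Uc sub sz Cc; exists c; split => // x.
have sub2 : {subset c <= enum V} by move=> y yc; rewrite mem_enum; apply: sub.
have sz2 : size (enum V) <= size c by rewrite -cardE.
have [_ E] := uniq_min_size Uc sub2 sz2.
by rewrite E mem_enum.
Qed.

Lemma adj_mul (gT : finGroupType) (A : {set gT}) x a : a \in A -> cay_adj A x (x * a).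
Proof. by move=> aA; apply/existsP; exists a; rewrite aA eqxx. Qed.

Lemma adj_mulV (gT : finGroupType) (A : {set gT}) x a : a^-1 \in A -> cay_adj A x (x * a).
Proof. by move=> aA; apply/existsP; exists a^-1; rewrite aA invgK eqxx orbT. Qed.

Lemma adj_t (gT : finGroupType) (A : {set gT}) x a : (a \in A) || (a^-1 \in A) -> cay_adj A x (x * a).
Proof. by case/orP; [apply: adj_mul | apply: adj_mulV]. Qed.

Lemma fgl (gT : finGroupType) (G : {group gT}) (S : {set gT}) (s : gT) n (v t : nat -> gT) :
  s \in S -> <[s]> <| G -> 0 < n -> #|G| = (n * #[s])%N ->
  (forall i, i <= n -> v i \in G) ->
  (forall i, i < n -> (t i \in S) || ((t i)^-1 \in S)) ->
  (forall i, v i.+1 = v i * t i) ->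
  (forall i j, i < n -> j < n -> coset <[s]> (v i) = coset <[s]> (v j) -> i = j) ->
  coset <[s]> (v n) = coset <[s]> (v 0) ->
  s ^+ (\sum_(i < n) cexp s (v i)^-1) = 1 ->
  cay_hamiltonian G S.
Proof.
move=> sS nNG n0 cardG vG tS vS vD vC W.
set k := #[s]; have k0 : 0 < k := order_gt0 s.
have GN : G \subset 'N(<[s]>) by apply: normal_norm.
have NG : <[s]> \subset G by apply: normal_sub.
have sG : s \in G by apply: (subsetP NG); apply: cycle_id.
set g := v n * (v 0)^-1.
have gN : g \in <[s]> by apply: coset_eq_mem GN (vG n _) (vG 0 _) vC.
have gG : g \in G by apply: (subsetP NG).
have [j gj] := cycleP _ _ gN.
set L := gcdn k j; set d := #[g].
have L0 : 0 < L by rewrite gcdn_gt0 k0.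
have dL : (d * L = k)%N by rewrite /d gj orderXgcd -/k -/L divnK // dvdn_gcdl.
have d0 : 0 < d := order_gt0 g.
set e := fun i => cexp s (v i)^-1.
have eP : forall i, i <= n -> s ^ (v i)^-1 = s ^+ e i.
  move=> i Hi; apply: cexpP; rewrite memJ_norm ?cycle_id //.
  by rewrite groupV; apply: (subsetP GN); apply: vG.
have vs : forall i, i <= n -> v i * s = s ^+ e i * v i.
  by move=> i Hi; rewrite conjgCV eP.
set E := fun i => (\sum_(l < i) e l)%N.
have ES : forall i, E i.+1 = (E i + e i)%N by move=> i; rewrite /E big_ord_recr.
have E0 : E 0 = 0%N by rewrite /E big_ord0.
set F := fun a i b => g ^+ a * s ^+ (L.-1 * E i + b * e i)%N * v i.
have F1 : forall a i b, i <= n -> F a i b * s = F a i b.+1.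
  move=> a i b Hi; rewrite /F -mulgA vs // mulgA -(mulgA (g ^+ a)) -expgnDr.
  by congr (_ * s ^+ _ * _); rewrite mulSn; lia.
have F2 : forall a i, i < n -> F a i L.-1 * t i = F a i.+1 0.
  move=> a i Hi; rewrite /F -mulgA -vS ES mulnDr mul0n addn0 //.
have F3 : forall a, F a n.-1 L.-1 * t n.-1 = g ^+ a.+1 * v 0.
  move=> a; rewrite F2 ?prednK // /F mul0n addn0 mulnC expgnA W expg1n mulg1.
  by rewrite /g expgSr -mulgA mulgVK.
have F00 : forall a, F a 0 0 = g ^+ a * v 0.
  by move=> a; rewrite /F E0 muln0 mul0n expg0 mulg1.
have Fin : forall a i b, i <= n -> F a i b \in G.
  by move=> a i b Hi; rewrite /F !groupM ?groupX ?vG.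
have FN : forall a i b, i <= n -> coset <[s]> (F a i b) = coset <[s]> (v i).
  move=> a i b Hi; rewrite /F coset_mulN //; first by apply: (subsetP GN); apply: vG.
  by rewrite groupM ?groupX ?cycle_id.
rewrite /cay_hamiltonian; apply: (@ham_pack1 _ _ _ (lex3 F d n L)).
- apply: uniq_lex3 => a i b a' i' b' Ha Hi Hb Ha' Hi' Hb' E1.
  have ii : i = i'.
    by apply: vD => //; rewrite -(FN a i b) ?(ltnW Hi) // -(FN a' i' b') ?(ltnW Hi') // E1.
  subst i'; move: E1; rewrite /F => /mulIg /eqP.
  rewrite gj -!expgnA -!expgnDr eq_expg_mod_order -/k => H.
  have cke : coprime k (e i).
    have : #[s ^+ e i] = k by rewrite -eP ?(ltnW Hi) // orderJ.
    rewrite orderXgcd -/k /coprime => Hk.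
    have := divnK (dvdn_gcdl k (e i)); rewrite Hk => Hk2.
    have g0 : 0 < gcdn k (e i) by rewrite gcdn_gt0 k0.
    apply/eqP; nia.
  have bb := inj_arith k0 cke Hb Hb' H.
  subst b'; move: H; rewrite eqn_modDr -eq_expg_mod_order !expgnA -gj.
  rewrite eq_expg_mod_order -/d !modn_small // => /eqP aa.
  by split.
- by move=> x /mem_lex3 [a [i [b [_ Hi _ ->]]]]; apply: Fin; apply: ltnW.
- by rewrite cardG size_lex3 -/k -dL; nia.
- apply: cycle_lex3 => //.
  + move=> a i b Ha Hi Hb; rewrite -F1 ?(ltnW Hi) //; exact: adj_mul.
  + move=> a i Ha Hi; rewrite -F2; [apply: adj_t; apply: tS; lia | lia].
  + move=> a Ha; rewrite F00 -F3; apply: adj_t; apply: tS; lia.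
  + have -> : F 0 0 0 = F d.-1 n.-1 L.-1 * t n.-1.
      by rewrite F3 prednK // expg_order F00 expg0.
    apply: adj_t; apply: tS; lia.
Qed.

Lemma ham_pack2 (T : finType) (V : {set T}) (r : rel T) (c : seq T) :
  (forall x, x \in V -> x \in c) -> (forall x, x \in c -> x \in V) ->
  size c <= #|V| -> path.cycle r c ->
  exists c, [/\ uniq c, V =i c & path.cycle r c].
Proof.
move=> cov sub sz Cc; exists c; split => //; last first.
  by move=> x; apply/idP/idP; [apply: cov | apply: sub].
apply: (@leq_size_uniq _ (enum V)); first exact: enum_uniq.
  by move=> x; rewrite mem_enum; apply: cov.
by rewrite -cardE.
Qed.

Lemma adj_up (gT : finGroupType) (S : {set gT}) s x m :
  s \in S -> commute s x -> cay_adj S (s ^+ m * x) (s ^+ m.+1 * x).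
Proof.
move=> sS cx; have -> : s ^+ m.+1 * x = s ^+ m * x * s.
  by rewrite expgSr -!mulgA; congr (_ * _); apply: cx.
exact: adj_mul.
Qed.

Lemma adj_down (gT : finGroupType) (S : {set gT}) s x m :
  s \in S -> commute s x -> cay_adj S (s ^+ m.+1 * x) (s ^+ m * x).
Proof.
move=> sS cx; have -> : s ^+ m * x = s ^+ m.+1 * x * s^-1.
  rewrite expgSr -!mulgA; congr (_ * _); rewrite mulgA.
  have -> : s * x = x * s by apply: cx.
  by rewrite mulgK.
by apply: adj_mulV; rewrite invgK.
Qed.

Lemma comb (gT : finGroupType) (G : {group gT}) (S : {set gT}) (s : gT) n (v t : nat -> gT) :
  s \in S -> <[s]> <| G -> 1 < n -> 1 < #[s] -> #|G| = (n * #[s])%N ->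
  (forall i, i <= n -> v i \in G) ->
  (forall i, i < n -> (t i \in S) || ((t i)^-1 \in S)) ->
  (forall i, v i.+1 = v i * t i) ->
  (forall g, g \in G -> exists2 i, i < n & coset <[s]> g = coset <[s]> (v i)) ->
  (forall h, h \in G -> commute s h) ->
  cay_hamiltonian G S.
Proof.
move=> sS nNG n1 k1 cardG vG tS vS vCov cent.
set k := #[s] in k1 cardG.
have GN : G \subset 'N(<[s]>) by apply: normal_norm.
have NG : <[s]> \subset G by apply: normal_sub.
have sG : s \in G by apply: (subsetP NG); apply: cycle_id.
have cv : forall i, i <= n -> commute s (v i) by move=> i Hi; apply: cent; apply: vG.
pose h i b := if odd i then (k.-1 - b)%N else b.+1.
pose col0 := [seq s ^+ b * v 0 | b <- iota 0 k].
pose colS i := [seq s ^+ h i b * v i | b <- iota 0 k.-1].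
pose snake := flatten [seq colS i | i <- iota 1 n.-1].
pose row0 := [seq v (n.-1 - b)%N | b <- iota 0 n.-1].
have tadj : forall i x, i < n -> cay_adj S x (x * t i).
  by move=> i x Hi; apply: adj_t; apply: tS.
have tadjV : forall i x, i < n -> cay_adj S x (x * (t i)^-1).
  by move=> i x Hi; apply: adj_t; rewrite invgK orbC; apply: tS.
have colstep : forall i b, i < n -> b.+1 < k.-1 ->
    cay_adj S (s ^+ h i b * v i) (s ^+ h i b.+1 * v i).
  move=> i b Hi Hb; rewrite /h; case: ifP => _.
    have -> : (k.-1 - b = (k.-1 - b.+1).+1)%N by lia.
    by apply: adj_down => //; apply: cv; lia.
  by apply: adj_up => //; apply: cv; lia.
have hlast : forall i, h i (k.-2) = h i.+1 0.
  by move=> i; rewrite /h /=; case: (odd i) => /=; lia.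
have lastcol : forall i y, last y (colS i) = s ^+ h i k.-2 * v i.
  by move=> i y; rewrite /colS -(prednK (_ : 0 < k.-1)) ?last_iota //; lia.
rewrite /cay_hamiltonian; apply: (@ham_pack2 _ _ _ (col0 ++ snake ++ row0)).
- move=> g gG; have [i Hi E] := vCov g gG.
  have gv : g * (v i)^-1 \in <[s]> by apply: coset_eq_mem GN gG (vG i _) E; lia.
  have [m0 Hm0] := cycleP _ _ gv; set m := (m0 %% k)%N.
  have mk : m < k by rewrite ltn_mod; lia.
  have gm : g = s ^+ m * v i by rewrite expg_mod_order -Hm0 mulgVK.
  rewrite !mem_cat; case: (posnP i) => [i0|ipos].
    by rewrite gm i0 (map_f (fun b => s ^+ b * v 0)) ?mem_iota.
  case: (posnP m) => [m0z|mpos].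
    apply/orP; right; apply/orP; right; rewrite gm m0z expg0 mul1g.
    have -> : i = (n.-1 - (n.-1 - i))%N by lia.
    by rewrite (map_f (fun b => v (n.-1 - b)%N)) // mem_iota; lia.
  apply/orP; right; apply/orP; left; apply/flatten_mapP; exists i; first by rewrite mem_iota; lia.
  rewrite gm /colS; apply/mapP.
  exists (if odd i then (k.-1 - m)%N else m.-1); first by rewrite mem_iota; case: (odd i); lia.
  by rewrite /h; case: (odd i) => /=; congr (s ^+ _ * _); lia.
- move=> x; rewrite !mem_cat => /orP [|/orP []].
  + by case/mapP => b _ ->; rewrite groupM ?groupX ?vG.
  + case/flatten_mapP => i; rewrite mem_iota => Hi /mapP [b _ ->].
    by rewrite groupM ?groupX ?vG //; lia.
  + by case/mapP => b _ ->; rewrite vG //; lia.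
- rewrite cardG !size_cat (@size_flat _ _ _ k.-1) ?size_map ?size_iota; first by nia.
  by move=> i _; rewrite size_map size_iota.
have k0 : 0 < k.-1 by lia.
have vdown : forall i, i < n -> cay_adj S (v i.+1) (v i).
  by move=> i Hi; rewrite -(mulgK (t i) (v i)) -vS; apply: tadjV.
have lastrow : last (v 0) (col0 ++ snake ++ row0) = v 1%N.
  rewrite !last_cat /row0 -(prednK (_ : 0 < n.-1)) ?last_iota; [congr v; lia | lia].
have lastsnake : forall y, last y snake = s ^+ h n.-1 k.-2 * v n.-1.
  move=> y; rewrite /snake -(prednK (_ : 0 < n.-1)) ?(last_flat _ (v 0)); try lia.
    by rewrite lastcol add1n.
  by rewrite size_map size_iota.
rewrite (cycle_path (v 0)) lastrow cat_path; apply/andP; split.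
  apply: path_iota => [_|b _ Hb]; first by rewrite expg0 mul1g; apply: vdown; lia.
  by apply: adj_up => //; apply: cv.
rewrite cat_path; apply/andP; split.
  have -> : last (v 1%N) col0 = s ^+ k.-1 * v 0.
    by rewrite /col0 -{1}(prednK (ltnW k1)) last_iota.
  apply: path_flat => [_|j y Hj1 Hj2].
    apply: path_iota => [_|b _ Hb]; last by apply: colstep => //; lia.
    by rewrite /h /= subn0 vS mulgA; apply: tadj; lia.
  rewrite lastcol; apply: path_iota => [_|b _ Hb]; last by apply: colstep => //; lia.
  by rewrite hlast vS mulgA; apply: tadj; lia.
rewrite lastsnake; apply: path_iota => [_|b _ Hb].
  rewrite subn0 /h; case: ifP => _.
    have -> : (k.-1 - k.-2 = 1)%N by lia.
    rewrite -{2}(mul1g (v n.-1)) -(expg0 s); apply: adj_down => //; apply: cv; lia.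
  have -> : k.-2.+1 = k.-1 by lia.
  have E : v n.-1 = s ^+ k.-1.+1 * v n.-1.
    by rewrite prednK ?(ltnW k1) // expg_order mul1g.
  rewrite {2}E.
  by apply: adj_up => //; apply: cv; lia.
have -> : (n.-1 - b = (n.-1 - b.+1).+1)%N by lia.
by apply: vdown; lia.
Qed.
Lemma conjg_pow (gT : finGroupType) (s : gT) a m : (s ^+ a) ^ (s ^+ m) = s ^+ a.
Proof. by rewrite conjgE -expgnDr addnC expgnDr mulKg. Qed.

Lemma conj_coset (gT : finGroupType) (G : {group gT}) (s x y : gT) :
  <[s]> <| G -> x \in G -> y \in G -> coset <[s]> x = coset <[s]> y ->
  s ^ x^-1 = s ^ y^-1.
Proof.
move=> nNG xG yG E.
have GN : G \subset 'N(<[s]>) by apply: normal_norm.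
have /cycleP [m Hm] := coset_eq_mem GN xG yG E.
have -> : x^-1 = y^-1 * (s ^+ m)^-1 by rewrite -Hm invMg invgK mulKg.
have /cycleP [a Ha] : s ^ y^-1 \in <[s]>.
  by rewrite memJ_norm ?cycle_id // groupV; apply: (subsetP GN).
by rewrite conjgM Ha -{1}(conjg_pow s a m) conjgK.
Qed.

Theorem mainTheorem2 (gT : finGroupType) (G : {group gT}) (S : {set gT})
  (s : gT) (p q : nat) :
  <<S>> = G -> s \in S ->
  <[s]> <| G ->
  prime p -> prime q -> p != q -> (#[s] %| p * q)%N ->
  s ^+ p \in 'Z(G) ->
  (q %| #|G / <[s]>|)%N ->
  cay_hamiltonian (G / <[s]>) (coset <[s]> @: S) ->
  cay_hamiltonian G S.
Proof.
move=> genS sS nNG pp pq pnq kpq spZ qn [cq [Uc Ec Cc]].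
have sSG : S \subset G by rewrite -genS subset_gen.
have [v [t [[n0 nq cardG vG tS] [vS vD vCov vC]]]] := reps sSG nNG Uc Ec Cc.
move: n0 nq cardG vG tS vD vCov vC; set n := size cq => n0 nq cardG vG tS vD vCov vC.
have n1 : 1 < n.
  rewrite -nq in qn; have := dvdn_leq n0 qn; have := prime_gt1 pq; lia.
have GN : G \subset 'N(<[s]>) by apply: normal_norm.
have NG := normal_sub nNG.
set k := #[s] in kpq cardG.
case: (eqVneq (s ^+ (\sum_(i < n) cexp s (v i)^-1)) 1) => W.
  exact: (fgl sS nNG n0 cardG vG tS vS vD vC W).
set E := (\sum_(i < n) cexp s (v i)^-1)%N in W.
have k0 : 0 < k := order_gt0 s.
have k1 : 1 < k.
  rewrite ltnNge; apply/negP => k1; move/eqP: W; apply.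
  by rewrite -expg_mod_order -/k (_ : k = 1%N) ?modn1 //; lia.
apply: (comb sS nNG n1 k1 cardG vG tS vS vCov) => h hG.
have spc : forall g, g \in G -> (s ^+ p) ^ g = s ^+ p.
  move=> g gG; case/centerP: spZ => _ /(_ g gG) cg.
  by rewrite conjgE cg mulKg.
have eP : forall g, g \in G -> s ^ g = s ^+ cexp s g.
  by move=> g gG; apply: cexpP; rewrite memJ_norm ?cycle_id //; apply: (subsetP GN).
have vGi : forall i : 'I_n, v i \in G by move=> i; apply: vG; apply: ltnW.
have sh := eP h hG; set r := cexp s h in sh.
have H1 : (E * p == 0 %[mod k])%N.
  have Hi : forall i : 'I_n, (cexp s (v i)^-1 * p = p %[mod k])%N.
    move=> i; apply/eqP; rewrite -eq_expg_mod_order expgnA -eP ?groupV //.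
    by rewrite -conjXg spc ?groupV.
  have -> : (E * p = n * p %[mod k])%N.
    rewrite /E big_distrl /= -modn_summ (eq_bigr (fun=> p %% k)%N); last by move=> i _; apply: Hi.
    by rewrite modn_summ sum_nat_const card_ord.
  rewrite mod0n; apply: dvdn_trans kpq _; rewrite [(n * p)%N]mulnC dvdn_pmul2l //.
    by rewrite nq.
  exact: prime_gt0.
have H3 : (p * r == p %[mod k])%N.
  by rewrite -eq_expg_mod_order mulnC expgnA -sh -conjXg spc.
pose pi (i : 'I_n) := odflt i [pick j : 'I_n | coset <[s]> (h^-1 * v i) == coset <[s]> (v j)].
have hvG : forall i : 'I_n, h^-1 * v i \in G by move=> i; rewrite groupM ?groupV.
have piP : forall i : 'I_n, coset <[s]> (h^-1 * v i) = coset <[s]> (v (pi i)).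
  move=> i; rewrite /pi; case: pickP => [j /eqP //|H0]; exfalso.
  have [j Hj Ej] := vCov _ (hvG i).
  by have := H0 (Ordinal Hj); rewrite /= Ej eqxx.
have cM : forall i : 'I_n, coset <[s]> (h^-1 * v i) = coset <[s]> h^-1 * coset <[s]> (v i).
  by move=> i; rewrite morphM // (subsetP GN) ?groupV.
have pi_inj : injective pi.
  move=> i i' E1; apply: ord_inj; apply: vD => //.
  by apply: (mulgI (coset <[s]> h^-1)); rewrite -!cM !piP E1.
have Hpi : forall i : 'I_n, (cexp s (v (pi i))^-1 = r * cexp s (v i)^-1 %[mod k])%N.
  move=> i; apply/eqP; rewrite -eq_expg_mod_order -!eP ?groupV //.
  rewrite -(conj_coset nNG (hvG i) (vGi (pi i)) (piP i)) invMg invgK conjgM.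
  by rewrite eP ?groupV // conjXg sh expgnA.
have H2 : (E * r == E %[mod k])%N.
  rewrite /E big_distrl /= -modn_summ (eq_bigr (fun i => cexp s (v (pi i))^-1 %% k)%N).
    by rewrite modn_summ [X in _ == X %% _](reindex_inj pi_inj).
  by move=> i _; rewrite Hpi mulnC.
case/orP: (main_arith pp pq pnq kpq H1 H2 H3) => [HE|Hr].
  by move/eqP: W; rewrite -eq_expg_mod_order in HE; rewrite (eqP HE) expg0.
rewrite /commute conjgC.
suff -> : s ^ h = s by [].
by rewrite sh; apply/eqP; rewrite -[X in _ == X]expg1 eq_expg_mod_order.
Qed.
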